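(* Let $n,l_1,u_1,l_2,u_2$ be non-negative integers and $(f(k))$, $(g(k))$ complex sequences such that $\sum_{k=l_1}^{u_1}f(k)t^k(1-t)^{n-k}=\sum_{k=l_2}^{u_2}g(k)t^k$ for all complex $t$. Let $s\in\mathbb{C}\setminus\mathbb{Z}^{-}$, $s\neq0$. Then \[ \sum_{k=l_1}^{u_1}\frac{f(k)}{(k+s)\binom{n+s}{k+s}}=\sum_{k=l_2}^{u_2}\frac{g(k)}{k+s},\qquad \sum_{k=l_1}^{u_1}\frac{f(k)}{(k+1)\binom{n+1}{k+1}}=\sum_{k=l_2}^{u_2}\frac{g(k)}{k+1}, \] \[ \sum_{k=l_1}^{u_1}f(k)\frac{H_{n-k}-H_{n+s}}{(k+s)\binom{n+s}{k+s}}=-\sum_{k=l_2}^{u_2}g(k)\frac{H_{k+s}}{k+s},\qquad \sum_{k=l_1}^{u_1}f(k)\frac{H_{n-k}-H_{n+1}}{(k+1)\binom{n+1}{k+1}}=-\sum_{k=l_2}^{u_2}g(k)\frac{H_{k+1}}{k+1}. \]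
   Context: $\mathbb{Z}^{-}$ denotes the set of negative integers. For complex $z$ not a negative integer, $H_z=\psi(z+1)+\gamma$; for integers $m\ge0$, $H_m=\sum_{j=1}^m1/j$. Binomial coefficients with complex entries: $\binom{x}{y}=\frac{\Gamma(x+1)}{\Gamma(y+1)\Gamma(x-y+1)}$. *)

(* Defs.v *)
From Stdlib Require Import Reals Arith Factorial.
From Coquelicot Require Import Coquelicot.

Open Scope C_scope.

Definition Clim (u : nat -> C) : C :=
  @lim (CompleteNormedModule.CompleteSpace _ C_CompleteNormedModule) (filtermap u eventually).

(* a^z for a real a > 0 and complex z:  exp(z ln a). *)
Definition Rcpow (a : R) (z : C) : C :=
  (exp (Re z * ln a) * cos (Im z * ln a),
   exp (Re z * ln a) * sin (Im z * ln a))%R.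

Fixpoint Cpoch0 (z : C) (m : nat) : C :=
  match m with
  | O => z
  | S m' => Cpoch0 z m' * (z + RtoC (INR m))
  end.

(* Euler's Gamma function via the Gauss limit formula
   Gamma(z) = lim_{m->oo} m! m^z / (z (z+1) ... (z+m)),
   valid for z not in {0,-1,-2,...}. *)
Definition CGamma (z : C) : C :=
  Clim (fun m => RtoC (INR (Factorial.fact m)) * Rcpow (INR m) z
                 / Cpoch0 z m).

Definition Cbinom (x y : C) : C :=
  CGamma (x + 1) / (CGamma (y + 1) * CGamma (x - y + 1)).

Definition Hnat (m : nat) : C :=
  sum_n_m (fun j => / RtoC (INR j)) 1 m.

(* Harmonic numbers of complex argument z not a negative integer:
   H_z = psi(z+1) + gamma = sum_{j>=1} (1/j - 1/(j+z)). *)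
Definition HC (z : C) : C :=
  Clim (fun N => sum_n_m (fun j => / RtoC (INR j) - / (RtoC (INR j) + z)) 1 N).

(* Main.v *)
Require Import Defs.
From Stdlib Require Import Reals Lia Lra Arith ZArith.
From Coquelicot Require Import Coquelicot.
Open Scope C_scope.

Lemma multC (a b : C) : mult a b = a * b. Proof. reflexivity. Qed.
Lemma plusC (a b : C) : plus a b = a + b. Proof. reflexivity. Qed.
Lemma zeroC : (zero : C) = 0. Proof. reflexivity. Qed.
Lemma oneC : (one : C) = 1. Proof. reflexivity. Qed.

Lemma sumC_mult_r (a : C) (u : nat -> C) n m : sum_n_m (fun k => u k * a) n m = sum_n_m u n m * a.
Proof. exact (sum_n_m_mult_r (K := C_Ring) a u n m). Qed.
Lemma sumC_mult_l (a : C) (u : nat -> C) n m : sum_n_m (fun k => a * u k) n m = a * sum_n_m u n m.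
Proof. exact (sum_n_m_mult_l (K := C_Ring) a u n m). Qed.
Lemma sumC_plus (u v : nat -> C) n m : sum_n_m (fun k => u k + v k) n m = sum_n_m u n m + sum_n_m v n m.
Proof. exact (sum_n_m_plus (G := C_AbelianMonoid) u v n m). Qed.

Lemma RtoC_nz (r : R) : r <> 0%R -> RtoC r <> 0.
Proof. intros H E. apply H. unfold RtoC in E. injection E. auto. Qed.

Lemma pow_nS (t : C) n : pow_n t (S n) = t * pow_n t n. Proof. reflexivity. Qed.
Lemma pow_n0 (t : C) : pow_n t 0 = RtoC 1. Proof. reflexivity. Qed.

Lemma sumR_nonneg (a : nat -> R) n m : (forall k, 0 <= a k)%R -> (0 <= sum_n_m a n m)%R.
Proof.
  intros H. assert (H0 := sum_n_m_le (fun _ => 0%R) a n m H).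
  replace (sum_n_m (fun _ => 0%R) n m) with 0%R in H0; [exact H0|].
  symmetry. exact (sum_n_m_const_zero (G := R_AbelianMonoid) n m).
Qed.

Lemma sumC_zero (a : nat -> C) n m : (forall k, (n <= k <= m)%nat -> a k = 0) -> @eq C (sum_n_m a n m) 0.
Proof.
  intros H. transitivity (sum_n_m (fun _ : nat => (zero : C)) n m).
  apply sum_n_m_ext_loc. intros. rewrite H; auto.
  exact (sum_n_m_const_zero (G := C_AbelianMonoid) n m).
Qed.

Ltac cring := match goal with |- @eq _ ?a ?b => change (@eq C a b) end; ring.

Definition W (N : nat) (w c : nat -> C) : C := sum_n_m (fun j => c j * w j) 0 N.

Lemma sum_swap (h : nat -> nat -> C) (a b p q : nat) :
  sum_n_m (fun j => sum_n_m (fun k => h k j) a b) p q =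
  sum_n_m (fun k => sum_n_m (fun j => h k j) p q) a b.
Proof.
  destruct (le_lt_dec a b) as [Hab|Hab].
  - induction b as [|b IH].
    + assert (a = 0)%nat by lia. subst. rewrite sum_n_n. apply sum_n_m_ext. intros. now rewrite sum_n_n.
    + destruct (Nat.eq_dec a (S b)) as [->|Hne].
      * rewrite sum_n_n. apply sum_n_m_ext; intros; now rewrite sum_n_n.
      * rewrite sum_n_Sm by lia. rewrite <- IH by lia.
        rewrite <- sum_n_m_plus. apply sum_n_m_ext. intros. rewrite sum_n_Sm by lia. reflexivity.
  - rewrite (sum_n_m_zero _ a b) by lia. rewrite zeroC. apply sumC_zero. intros. now rewrite sum_n_m_zero.
Qed.

Lemma W_sum N w (h : nat -> nat -> C) a b :
  W N w (fun j => sum_n_m (fun k => h k j) a b) = sum_n_m (fun k => W N w (h k)) a b.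
Proof.
  unfold W. rewrite <- sum_swap. apply sum_n_m_ext. intros j.
  rewrite <- sumC_mult_r. reflexivity.
Qed.

Lemma W_scal N w (c : nat -> C) a : W N w (fun j => a * c j) = a * W N w c.
Proof.
  unfold W. rewrite <- sumC_mult_l. apply sum_n_m_ext. intros k. cring.
Qed.

Lemma W_minus N w (c d : nat -> C) : W N w (fun j => c j - d j) = W N w c - W N w d.
Proof.
  unfold W. replace (sum_n_m (fun j : nat => c j * w j) 0 N - sum_n_m (fun j : nat => d j * w j) 0 N) with (sum_n_m (fun j : nat => c j * w j) 0 N + (- (1)) * sum_n_m (fun j : nat => d j * w j) 0 N) by cring.
  rewrite <- sumC_mult_l. rewrite <- sumC_plus.
  apply sum_n_m_ext. intros. cring.
Qed.

Definition mono (k : nat) : nat -> C := fun j => if Nat.eqb j k then 1 else 0.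

Lemma W_mono_gen N w k : W N w (mono k) = if Nat.leb k N then w k else 0.
Proof.
  unfold W, mono. induction N as [|N IH].
  - rewrite sum_n_n. destruct k; simpl; cring.
  - rewrite sum_n_Sm by lia. rewrite IH, plusC.
    destruct (Nat.leb k N) eqn:E1.
    + apply Nat.leb_le in E1. replace (Nat.leb k (S N)) with true by (symmetry; apply Nat.leb_le; lia).
      replace (Nat.eqb (S N) k) with false by (symmetry; apply Nat.eqb_neq; lia). cring.
    + apply Nat.leb_gt in E1. destruct (Nat.eq_dec k (S N)) as [->|Hne].
      * rewrite Nat.eqb_refl. replace (Nat.leb (S N) (S N)) with true by (symmetry; apply Nat.leb_le; lia). cring.
      * replace (Nat.leb k (S N)) with false by (symmetry; apply Nat.leb_gt; lia).
        replace (Nat.eqb (S N) k) with false by (symmetry; apply Nat.eqb_neq; lia). cring.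
Qed.

Lemma W_mono N w k : (k <= N)%nat -> W N w (mono k) = w k.
Proof. intros H. rewrite W_mono_gen. apply Nat.leb_le in H. now rewrite H. Qed.

Lemma sum_Cmod_le (a : nat -> C) n m : Cmod (sum_n_m a n m) <= sum_n_m (fun k => Cmod (a k)) n m.
Proof. apply (norm_sum_n_m (V := C_NormedModule)). Qed.

Lemma W_split N w c : W (S N) w c = c 0%nat * w 0%nat + W N (fun j => w (S j)) (fun j => c (S j)).
Proof.
  unfold W. rewrite sum_Sn_m by lia. rewrite <- sum_n_m_S. reflexivity.
Qed.

Lemma poly_coef0 N : forall c : nat -> C,
  (forall t : C, t <> 0 -> W N (fun j => pow_n t j) c = 0) -> forall j, (j <= N)%nat -> c j = 0.
Proof.
  induction N as [|N IH]; intros c Hc j Hj.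
  - assert (j = 0)%nat by lia. subst. specialize (Hc (RtoC 1) (RtoC_nz 1 ltac:(lra))).
    unfold W in Hc. rewrite sum_n_n in Hc. simpl in Hc. rewrite oneC in Hc. rewrite <- Hc. cring.
  - assert (Hq : forall t : C, W (S N) (fun j => pow_n t j) c = c 0%nat + t * W N (fun j => pow_n t j) (fun j => c (S j))).
    { intros t. rewrite W_split. rewrite pow_n0. f_equal. cring.
      unfold W. rewrite <- sumC_mult_l. apply sum_n_m_ext. intros. rewrite pow_nS. cring. }
    assert (Hbd : forall t : C, Cmod t <= 1 -> Cmod (W N (fun j => pow_n t j) (fun j => c (S j))) <= sum_n_m (fun j => Cmod (c (S j))) 0 N).
    { intros t Ht. unfold W. eapply Rle_trans. apply sum_Cmod_le. apply sum_n_m_le. intros k.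
      rewrite Cmod_mult. rewrite <- (Rmult_1_r (Cmod (c (S k)))) at 2. apply Rmult_le_compat_l. apply Cmod_ge_0.
      eapply Rle_trans. apply (abs_pow_n (K := C_AbsRing)). rewrite <- (pow1 k). apply pow_incr. split; [apply Cmod_ge_0|exact Ht]. }
    assert (H0 : c 0%nat = 0).
    { set (M := sum_n_m (fun j => Cmod (c (S j))) 0 N).
      assert (HM : 0 <= M). { unfold M. apply sumR_nonneg. intros. apply Cmod_ge_0. }
      destruct (Ceq_dec (c 0%nat) 0) as [E|E]; [exact E|exfalso].
      set (a := Cmod (c 0%nat)). assert (Ha : 0 < a) by (apply Cmod_gt_0; exact E).
      set (r := (a / (a + M + 1))%R).
      assert (Hr0 : 0 < r) by (unfold r; apply Rdiv_lt_0_compat; lra).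
      assert (Hr1 : r < 1) by (unfold r; apply Rmult_lt_reg_r with ((a + M + 1)%R); [lra|]; field_simplify; lra).
      assert (Ht : RtoC r <> 0) by (apply RtoC_nz; lra).
      specialize (Hc _ Ht). rewrite Hq in Hc.
      assert (Hc' : c 0%nat = - (RtoC r * W N (fun j => pow_n (RtoC r) j) (fun j => c (S j)))).
      { set (Q := RtoC r * W N (fun j => pow_n (RtoC r) j) (fun j => c (S j))) in *.
        transitivity (c 0%nat + Q - Q). cring. rewrite Hc. cring. }
      assert (Hm : Cmod (RtoC r) <= 1) by (rewrite Cmod_R, Rabs_pos_eq; lra).
      specialize (Hbd _ Hm). fold M in Hbd.
      assert (a <= r * M).
      { unfold a. rewrite Hc'. rewrite Cmod_opp, Cmod_mult, Cmod_R, Rabs_pos_eq by lra.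
        apply Rmult_le_compat_l; lra. }
      assert (r * M < a).
      { unfold r. apply Rmult_lt_reg_r with ((a + M + 1)%R); [lra|]. field_simplify; nra. }
      lra. }
    destruct j as [|j]; [exact H0|].
    apply (IH (fun j => c (S j))); [|lia].
    intros t Ht. specialize (Hc t Ht). rewrite Hq, H0 in Hc.
    assert (E : t * W N (fun j0 : nat => pow_n t j0) (fun j0 : nat => c (S j0)) = 0) by (rewrite <- Hc; ring).
    transitivity (/ t * (t * W N (fun j0 : nat => pow_n t j0) (fun j0 : nat => c (S j0)))).
    field. exact Ht. rewrite E. cring.
Qed.

Lemma W_uniq N (c d : nat -> C) :
  (forall t : C, W N (fun j => pow_n t j) c = W N (fun j => pow_n t j) d) ->
  forall w, W N w c = W N w d.
Proof.
  intros H w.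
  assert (Hz : forall j, (j <= N)%nat -> c j - d j = 0).
  { apply poly_coef0. intros t _. rewrite W_minus, H. cring. }
  assert (E : W N w (fun j => c j - d j) = 0).
  { unfold W. apply sumC_zero.
    intros k Hk. rewrite Hz by lia. cring. }
  rewrite W_minus in E. transitivity ((W N w c - W N w d) + W N w d). cring. rewrite E. cring.
Qed.

Fixpoint pk (k m : nat) : nat -> C :=
  match m with
  | O => mono k
  | S m' => fun j => pk k m' j - pk (S k) m' j
  end.

Definition cp (t : C) (n : nat) : C := pow_n t n.
Lemma cpS (t : C) n : cp t (S n) = t * cp t n. Proof. reflexivity. Qed.
Lemma cp0 (t : C) : cp t 0 = 1. Proof. reflexivity. Qed.

Lemma ev_pk N (t : C) k m : (k + m <= N)%nat ->
  W N (cp t) (pk k m) = cp t k * cp (1 - t) m.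
Proof.
  revert k. induction m as [|m IH]; intros k Hk.
  - simpl pk. rewrite W_mono by lia. rewrite cp0. cring.
  - simpl pk. rewrite W_minus, IH, IH by lia. rewrite !cpS. cring.
Qed.

Definition F (m : nat) (y : C) : C := RtoC (INR (fact m)) / Cpoch0 y m.

Lemma INR_S_C (m : nat) : RtoC (INR (S m)) = RtoC (INR m) + 1.
Proof. rewrite S_INR, RtoC_plus. reflexivity. Qed.

Lemma INR_plus_C (a b : nat) : RtoC (INR (a + b)) = RtoC (INR a) + RtoC (INR b).
Proof. rewrite plus_INR, RtoC_plus. reflexivity. Qed.

Lemma Cpoch0_shift y m : Cpoch0 y (S m) = y * Cpoch0 (y + 1) m.
Proof.
  induction m as [|m IH].
  - simpl. cring.
  - change (Cpoch0 y (S (S m))) with (Cpoch0 y (S m) * (y + RtoC (INR (S (S m))))).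
    rewrite IH. change (Cpoch0 (y + 1) (S m)) with (Cpoch0 (y + 1) m * (y + 1 + RtoC (INR (S m)))). rewrite (INR_S_C (S m)). cring.
Qed.

Lemma Cpoch0_nz y m : (forall j : nat, y + RtoC (INR j) <> 0) -> Cpoch0 y m <> 0.
Proof.
  intros H. induction m as [|m IH].
  - simpl. specialize (H 0%nat). simpl INR in H. intro E; apply H. rewrite E. cring.
  - change (Cpoch0 y (S m)) with (Cpoch0 y m * (y + RtoC (INR (S m)))). intro E. apply (H (S m)).
    transitivity (/ Cpoch0 y m * (Cpoch0 y m * (y + RtoC (INR (S m))))). field. exact IH.
    rewrite E. cring.
Qed.

Lemma F_rec m y : (forall j : nat, y + RtoC (INR j) <> 0) ->
  F m y - F m (y + 1) = F (S m) y.
Proof.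
  intros H. unfold F.
  assert (HA := Cpoch0_nz y m H).
  assert (Hy : y <> 0) by (specialize (H 0%nat); simpl INR in H; intro E; apply H; rewrite E; cring).
  assert (HS := H (S m)).
  assert (E1 : Cpoch0 y (S m) = Cpoch0 y m * (y + RtoC (INR (S m)))) by reflexivity.
  assert (HB : Cpoch0 (y + 1) m = Cpoch0 y m * (y + RtoC (INR (S m))) / y).
  { rewrite <- E1, Cpoch0_shift. field. exact Hy. }
  rewrite HB, E1. rewrite fact_simpl, mult_INR, RtoC_mult.
  field. repeat split; auto.
Qed.

Lemma Hnat_S m : Hnat (S m) = Hnat m + / RtoC (INR (S m)).
Proof. unfold Hnat. rewrite sum_n_Sm by lia. reflexivity. Qed.

Lemma Hnat_0 : Hnat 0 = 0.
Proof. unfold Hnat. rewrite sum_n_m_zero by lia. reflexivity. Qed.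

Section Lam.
Variable x : C.
Hypothesis Hx : forall j : nat, RtoC (INR j) + x <> 0.

Lemma Hx' k : forall j : nat, (RtoC (INR k) + x) + RtoC (INR j) <> 0.
Proof. intros j. replace ((RtoC (INR k) + x) + RtoC (INR j)) with (RtoC (INR (k + j)) + x).
  apply Hx. rewrite INR_plus_C. cring. Qed.

Lemma Lam_pk N k m : (k + m <= N)%nat ->
  W N (fun j => / (RtoC (INR j) + x)) (pk k m) = F m (RtoC (INR k) + x).
Proof.
  revert k. induction m as [|m IH]; intros k Hk.
  - simpl pk. rewrite W_mono by lia. unfold F. simpl. field.
    replace (RtoC 1) with (1 : C) by reflexivity. auto.
  - simpl pk. rewrite W_minus, IH, IH by lia.
    rewrite <- F_rec by apply Hx'. rewrite INR_S_C. f_equal. f_equal. cring.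
Qed.

Variable hh : nat -> C.
Hypothesis Hhh : forall j, hh (S j) = hh j + / (RtoC (INR (S j)) + x).

Lemma Phi_pk N k m : (k + m <= N)%nat ->
  W N (fun j => hh j / (RtoC (INR j) + x)) (pk k m) =
  (hh (k + m)%nat - Hnat m) * F m (RtoC (INR k) + x).
Proof.
  revert k. induction m as [|m IH]; intros k Hk.
  - simpl pk. rewrite W_mono by lia. unfold F. rewrite Hnat_0, Nat.add_0_r. simpl. field.
    specialize (Hx k). auto.
  - simpl pk. rewrite W_minus, IH, IH by lia.
    set (y := RtoC (INR k) + x).
    assert (Hy1 : RtoC (INR (S k)) + x = y + 1) by (unfold y; rewrite INR_S_C; cring).
    rewrite Hy1.
    replace (S k + m)%nat with (S (k + m)) by lia. replace (k + S m)%nat with (S (k + m)) by lia.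
    rewrite Hhh, Hnat_S.
    assert (Hs : RtoC (INR (S (k + m))) + x = y + RtoC (INR (S m))).
    { unfold y. replace (S (k + m)) with (k + S m)%nat by lia. rewrite INR_plus_C. cring. }
    rewrite Hs.
    assert (H := Hx' k). fold y in H.
    unfold F.
    assert (HA := Cpoch0_nz y m H).
    assert (Hy : y <> 0) by (specialize (H 0%nat); simpl INR in H; intro E; apply H; rewrite E; cring).
    assert (HS := H (S m)).
    assert (E1 : Cpoch0 y (S m) = Cpoch0 y m * (y + RtoC (INR (S m)))) by reflexivity.
    assert (HB : Cpoch0 (y + 1) m = Cpoch0 y m * (y + RtoC (INR (S m))) / y).
    { rewrite <- E1, Cpoch0_shift. field. exact Hy. }
    assert (HSm : RtoC (INR (S m)) <> 0) by (apply RtoC_nz; apply not_0_INR; lia).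
    rewrite HB, E1. rewrite fact_simpl, mult_INR, RtoC_mult.
    field. repeat split; auto.
Qed.
End Lam.

Theorem alg_main n l1 u1 l2 u2 (f g : nat -> C) (Hu1 : (u1 <= n)%nat)
  (Hid : forall t : C,
      sum_n_m (fun k => f k * pow_n t k * pow_n (1 - t) (n - k)) l1 u1
      = sum_n_m (fun k => g k * pow_n t k) l2 u2)
  (x : C) (Hx : forall j : nat, RtoC (INR j) + x <> 0)
  (hh : nat -> C) (Hhh : forall j, hh (S j) = hh j + / (RtoC (INR (S j)) + x)) :
  sum_n_m (fun k => f k * F (n - k) (RtoC (INR k) + x)) l1 u1
    = sum_n_m (fun k => g k / (RtoC (INR k) + x)) l2 u2 /\
  sum_n_m (fun k => f k * ((hh n - Hnat (n - k)) * F (n - k) (RtoC (INR k) + x))) l1 u1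
    = sum_n_m (fun k => g k * (hh k / (RtoC (INR k) + x))) l2 u2.
Proof.
  assert (Hid' : forall t : C, sum_n_m (fun k => f k * cp t k * cp (1 - t) (n - k)) l1 u1
      = sum_n_m (fun k => g k * cp t k) l2 u2) by exact Hid.
  set (N := (n + u2)%nat).
  set (c1 := fun j => sum_n_m (fun k => f k * pk k (n - k) j) l1 u1).
  set (c2 := fun j => sum_n_m (fun k => g k * mono k j) l2 u2).
  assert (HW1 : forall w, W N w c1 = sum_n_m (fun k => f k * W N w (pk k (n - k))) l1 u1).
  { intros w. unfold c1. rewrite W_sum. apply sum_n_m_ext. intros. apply W_scal. }
  assert (HW2 : forall w, W N w c2 = sum_n_m (fun k => g k * w k) l2 u2).
  { intros w. unfold c2. rewrite W_sum. apply sum_n_m_ext_loc. intros k Hk. rewrite W_scal, W_mono. reflexivity. unfold N; lia. }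
  assert (Heq : forall w, W N w c1 = W N w c2).
  { apply W_uniq. intros t. change (fun j => pow_n t j) with (cp t). rewrite HW1, HW2.
    rewrite <- Hid'. apply sum_n_m_ext_loc. intros k Hk. rewrite ev_pk by (unfold N; lia). cring. }
  split.
  - assert (E := Heq (fun j => / (RtoC (INR j) + x))). rewrite HW1, HW2 in E.
    transitivity (sum_n_m (fun k => f k * W N (fun j => / (RtoC (INR j) + x)) (pk k (n - k))) l1 u1).
    { apply sum_n_m_ext_loc. intros k Hk. rewrite Lam_pk by (auto; unfold N; lia). reflexivity. }
    rewrite E. apply sum_n_m_ext. intros. reflexivity.
  - assert (E := Heq (fun j => hh j / (RtoC (INR j) + x))). rewrite HW1, HW2 in E.
    transitivity (sum_n_m (fun k => f k * W N (fun j => hh j / (RtoC (INR j) + x)) (pk k (n - k))) l1 u1).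
    { apply sum_n_m_ext_loc. intros k Hk. rewrite Phi_pk by (auto; unfold N; lia).
      replace (k + (n - k))%nat with n by lia. reflexivity. }
    rewrite E. apply sum_n_m_ext. intros. reflexivity.
Qed.

Definition conv (u : nat -> C) (l : C) : Prop :=
  forall eps : R, (0 < eps)%R -> exists N : nat, forall m, (N <= m)%nat -> (Cmod (u m - l) < eps)%R.

Definition cauchy_seq (u : nat -> C) : Prop :=
  forall eps : R, (0 < eps)%R -> exists N : nat, forall p q, (N <= p)%nat -> (N <= q)%nat -> (Cmod (u p - u q) < eps)%R.

Lemma Cmod_sub_tri (a b c : C) : (Cmod (a - c) <= Cmod (a - b) + Cmod (b - c))%R.
Proof. replace (a - c) with ((a - b) + (b - c)) by ring. apply Cmod_triangle. Qed.

Lemma Cmod_sub_sym (a b : C) : Cmod (a - b) = Cmod (b - a).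
Proof. replace (a - b) with (- (b - a)) by ring. apply Cmod_opp. Qed.

Lemma conv_cauchy u l : conv u l -> cauchy_seq u.
Proof.
  intros H eps Heps. destruct (H (eps/2)%R ltac:(lra)) as [N HN]. exists N. intros p q Hp Hq.
  eapply Rle_lt_trans. apply (Cmod_sub_tri _ l). rewrite (Cmod_sub_sym l).
  pose proof (HN p Hp). pose proof (HN q Hq). lra.
Qed.

Lemma conv_unique u l l' : conv u l -> conv u l' -> l = l'.
Proof.
  intros H1 H2. cut (l - l' = 0). { intros E. transitivity (l - l' + l'). ring. rewrite E. ring. }
  apply Cmod_eq_0.
  destruct (Req_dec (Cmod (l - l')) 0) as [E|E]; [exact E|exfalso].
  assert (Hp : (0 < Cmod (l - l'))%R) by (pose proof (Cmod_ge_0 (l - l')); lra).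
  destruct (H1 _ (ltac:(lra) : (0 < Cmod (l - l') / 2)%R)) as [N1 HN1].
  destruct (H2 _ (ltac:(lra) : (0 < Cmod (l - l') / 2)%R)) as [N2 HN2].
  specialize (HN1 (N1 + N2)%nat ltac:(lia)). specialize (HN2 (N1 + N2)%nat ltac:(lia)).
  assert (T := Cmod_sub_tri l (u (N1 + N2)%nat) l'). rewrite (Cmod_sub_sym l (u _)) in T. lra.
Qed.

Lemma cauchy_Clim u : cauchy_seq u -> conv u (Clim u).
Proof.
  intros H.
  set (F := filtermap u eventually).
  assert (PF : ProperFilter F).
  { unfold F. apply filtermap_proper_filter. apply eventually_filter. }
  assert (CF : cauchy (T := CompleteNormedModule.CompleteSpace _ C_CompleteNormedModule) F).
  { intros eps. destruct (H eps (cond_pos eps)) as [N HN]. exists (u N). unfold F, filtermap.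
    exists N. intros n Hn. apply (norm_compat1 (V := C_NormedModule)). change (Cmod (u n - u N) < eps)%R. apply HN; lia. }
  intros eps Heps.
  assert (Hb := complete_cauchy (T := CompleteNormedModule.CompleteSpace _ C_CompleteNormedModule) F PF CF (mkposreal (eps / 2) ltac:(lra))).
  destruct Hb as [N HN]. exists N. intros m Hm. specialize (HN m Hm).
  assert (Hn := norm_compat2 (V := C_NormedModule) _ _ _ HN).
  change (Cmod (u m - Clim u) < sqrt 2 * (eps / 2))%R in Hn.
  assert (Hf : (sqrt 2 <= 2)%R).
  { rewrite <- (sqrt_square 2) at 2 by lra. apply sqrt_le_1_alt. lra. }
  eapply Rlt_le_trans. exact Hn. assert (0 < eps / 2)%R by lra. nra.
Qed.

Lemma conv_Clim u l : conv u l -> Clim u = l.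
Proof.
  intros H. apply (conv_unique u). apply cauchy_Clim. eapply conv_cauchy. exact H. exact H.
Qed.

Lemma nat_gt (r : R) : exists N : nat, (r < INR N)%R.
Proof.
  destruct (archimed r) as [H1 _]. destruct (Z_le_gt_dec 0 (up r)) as [Hz|Hz].
  - exists (Z.to_nat (up r)). rewrite INR_IZR_INZ, Z2Nat.id by lia. lra.
  - exists 0%nat. simpl. apply Rlt_trans with (IZR (up r)). lra. apply IZR_lt. lia.
Qed.

Lemma nat_gt_ge (r : R) (J : nat) : exists N : nat, (J <= N)%nat /\ (r < INR N)%R.
Proof.
  destruct (nat_gt r) as [N HN]. exists (N + J)%nat. split. lia.
  rewrite plus_INR. pose proof (pos_INR J). lra.
Qed.

Lemma conv_ext u v l J : (forall m, (J <= m)%nat -> u m = v m) -> conv v l -> conv u l.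
Proof.
  intros He H eps Heps. destruct (H eps Heps) as [N HN]. exists (N + J)%nat. intros m Hm.
  rewrite He by lia. apply HN. lia.
Qed.

Lemma conv_const c : conv (fun _ => c) c.
Proof. intros eps Heps. exists 0%nat. intros. replace (c - c) with (RtoC 0) by ring. rewrite Cmod_0. lra. Qed.

Lemma conv_plus u v a b : conv u a -> conv v b -> conv (fun m => u m + v m) (a + b).
Proof.
  intros H1 H2 eps Heps. destruct (H1 (eps/2)%R ltac:(lra)) as [N1 HN1]. destruct (H2 (eps/2)%R ltac:(lra)) as [N2 HN2].
  exists (N1 + N2)%nat. intros m Hm. replace (u m + v m - (a + b)) with ((u m - a) + (v m - b)) by ring.
  eapply Rle_lt_trans. apply Cmod_triangle. pose proof (HN1 m ltac:(lia)). pose proof (HN2 m ltac:(lia)). lra.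
Qed.

Lemma conv_mult u v a b : conv u a -> conv v b -> conv (fun m => u m * v m) (a * b).
Proof.
  intros H1 H2 eps Heps.
  set (A := (Cmod a + 1)%R). set (B := (Cmod b + 1)%R).
  assert (HA : (0 < A)%R) by (unfold A; pose proof (Cmod_ge_0 a); lra).
  assert (HB : (0 < B)%R) by (unfold B; pose proof (Cmod_ge_0 b); lra).
  set (d := Rmin 1 (eps / (A + B))).
  assert (Hd : (0 < d)%R) by (unfold d; apply Rmin_glb_lt; [lra| apply Rdiv_lt_0_compat; lra]).
  assert (Hd1 : (d <= 1)%R) by apply Rmin_l.
  assert (Hd2 : (d * (A + B) <= eps)%R).
  { assert (d <= eps / (A + B))%R by apply Rmin_r. apply Rmult_le_reg_r with (/ (A + B))%R.
    apply Rinv_0_lt_compat; lra. rewrite Rmult_assoc, Rinv_r by lra. lra. }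
  destruct (H1 d Hd) as [N1 HN1]. destruct (H2 d Hd) as [N2 HN2].
  exists (N1 + N2)%nat. intros m Hm. pose proof (HN1 m ltac:(lia)) as E1. pose proof (HN2 m ltac:(lia)) as E2.
  replace (u m * v m - a * b) with (u m * (v m - b) + b * (u m - a)) by ring.
  eapply Rle_lt_trans. apply Cmod_triangle. rewrite !Cmod_mult.
  assert (Hu : (Cmod (u m) <= A)%R).
  { unfold A. replace (u m) with ((u m - a) + a) by ring. eapply Rle_trans. apply Cmod_triangle. lra. }
  assert (Hb' : (Cmod b <= B)%R) by (unfold B; lra).
  pose proof (Cmod_ge_0 (u m)). pose proof (Cmod_ge_0 b). pose proof (Cmod_ge_0 (v m - b)). pose proof (Cmod_ge_0 (u m - a)).
  apply Rlt_le_trans with (A * d + B * d)%R; [|lra].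
  apply Rplus_le_lt_compat. apply Rmult_le_compat; lra.
  destruct (Req_dec (Cmod b) 0) as [Z|Z]. rewrite Z. nra. nra.
Qed.

Lemma conv_scal c u a : conv u a -> conv (fun m => c * u m) (c * a).
Proof. intros H. apply (conv_mult (fun _ => c)). apply conv_const. exact H. Qed.

Lemma conv_minus u v a b : conv u a -> conv v b -> conv (fun m => u m - v m) (a - b).
Proof.
  intros H1 H2. assert (H := conv_plus _ _ _ _ H1 (conv_scal (-(1)) _ _ H2)).
  intros eps Heps. destruct (H eps Heps) as [N HN]. exists N. intros m Hm. specialize (HN m Hm).
  replace (u m - v m - (a - b)) with (u m + - (1) * v m - (a + - (1) * b)) by ring. exact HN.
Qed.

Lemma Cmod_INR (m : nat) : Cmod (RtoC (INR m)) = INR m.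
Proof. rewrite Cmod_R. apply Rabs_pos_eq. apply pos_INR. Qed.

Lemma Cmod_lower (m : nat) (w : C) : (INR m - Cmod w <= Cmod (RtoC (INR m) + w))%R.
Proof.
  pose proof (Cmod_triangle (RtoC (INR m) + w) (- w)) as H. rewrite Cmod_opp in H.
  replace (RtoC (INR m) + w + - w) with (RtoC (INR m)) in H by ring. rewrite Cmod_INR in H. lra.
Qed.

Lemma conv_inv c w : conv (fun m => c / (RtoC (INR m) + w)) 0.
Proof.
  intros eps Heps. destruct (nat_gt (Cmod w + Cmod c / eps + 1)) as [N HN]. exists N. intros m Hm.
  assert (HmN : (INR N <= INR m)%R) by (apply le_INR; exact Hm).
  pose proof (Cmod_lower m w) as Hl.
  assert (Hc : (0 <= Cmod c / eps)%R) by (apply Rdiv_le_0_compat; [apply Cmod_ge_0|lra]).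
  assert (Hpos : (Cmod c / eps + 1 < Cmod (RtoC (INR m) + w))%R) by lra.
  assert (Hnz : RtoC (INR m) + w <> 0) by (apply Cmod_gt_0; lra).
  replace (c / (RtoC (INR m) + w) - 0) with (c / (RtoC (INR m) + w)) by ring.
  rewrite Cmod_div by exact Hnz.
  apply Rmult_lt_reg_r with (Cmod (RtoC (INR m) + w)). lra. unfold Rdiv. rewrite Rmult_assoc, Rinv_l by lra. rewrite Rmult_1_r.
  assert (Cmod c = eps * (Cmod c / eps))%R by (field; lra). nra.
Qed.

Lemma tail_add (u e : nat -> C) (K : R) (J : nat) : (1 <= J)%nat ->
  (forall m, (J <= m)%nat -> u (S m) = u m + e m) ->
  (forall m, (J <= m)%nat -> (Cmod (e m) <= K / (INR m * INR (S m)))%R) ->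
  forall p d, (J <= p)%nat -> (Cmod (u (p + d)%nat - u p) <= K / INR p - K / INR (p + d))%R.
Proof.
  intros HJ Hu He p d Hp. induction d as [|d IH].
  - rewrite Nat.add_0_r. replace (u p - u p) with (RtoC 0) by ring. rewrite Cmod_0. lra.
  - replace (p + S d)%nat with (S (p + d)) by lia. rewrite Hu by lia.
    replace (u (p + d)%nat + e (p + d)%nat - u p) with ((u (p + d)%nat - u p) + e (p + d)%nat) by ring.
    eapply Rle_trans. apply Cmod_triangle.
    assert (Hpd : (0 < INR (p + d))%R) by (apply lt_0_INR; lia).
    assert (E : (K / INR (p + d) - K / INR (S (p + d)) = K / (INR (p + d) * INR (S (p + d))))%R).
    { rewrite S_INR. field. lra. }
    pose proof (He (p + d)%nat ltac:(lia)). lra.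
Qed.

Lemma add_cauchy (u e : nat -> C) (K : R) (J : nat) : (1 <= J)%nat -> (0 <= K)%R ->
  (forall m, (J <= m)%nat -> u (S m) = u m + e m) ->
  (forall m, (J <= m)%nat -> (Cmod (e m) <= K / (INR m * INR (S m)))%R) ->
  cauchy_seq u.
Proof.
  intros HJ HK Hu He eps Heps.
  destruct (nat_gt_ge (2 * K / eps) J) as [N [HNJ HN]].
  assert (HN0 : (0 < INR N)%R) by (apply lt_0_INR; lia).
  assert (Hsm : (2 * K / INR N < eps)%R).
  { apply Rmult_lt_reg_r with (INR N). lra. unfold Rdiv. rewrite Rmult_assoc, Rinv_l by lra.
    assert (2 * K = eps * (2 * K / eps))%R by (field; lra). nra. }
  exists N. intros p q Hp Hq.
  assert (B : forall r, (N <= r)%nat -> (Cmod (u r - u N) <= K / INR N)%R).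
  { intros r Hr. replace r with (N + (r - N))%nat by lia.
    eapply Rle_trans. apply (tail_add u e K J HJ Hu He N (r - N) HNJ).
    assert (0 <= K / INR (N + (r - N)))%R by (apply Rdiv_le_0_compat; [lra| apply lt_0_INR; lia]). lra. }
  eapply Rle_lt_trans. apply (Cmod_sub_tri _ (u N)). rewrite (Cmod_sub_sym (u N)).
  pose proof (B p Hp). pose proof (B q Hq). unfold Rdiv in *. lra.
Qed.

Lemma exp_le_mono (x y : R) : (x <= y)%R -> (exp x <= exp y)%R.
Proof. intros H. destruct (Rle_lt_or_eq_dec x y H) as [H'|H']. left. apply exp_increasing. exact H'. right. now rewrite H'. Qed.

Lemma exp_le_inv (x : R) : (x < 1)%R -> (exp x <= 1 / (1 - x))%R.
Proof.
  intros H. pose proof (exp_ineq1_le (- x)) as E. pose proof (exp_pos x).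
  assert (Hm : (exp x * exp (- x) = 1)%R) by (rewrite <- exp_plus; replace (x + - x)%R with 0%R by ring; apply exp_0).
  apply Rmult_le_reg_r with (1 - x)%R. lra. unfold Rdiv. rewrite Rmult_1_l, Rinv_l by lra. nra.
Qed.

Lemma exp_sub1_le (x : R) : (0 <= x <= 1/2)%R -> (exp x - 1 <= 2 * x)%R.
Proof.
  intros H. pose proof (exp_le_inv x ltac:(lra)).
  assert (1 / (1 - x) <= 1 + 2 * x)%R.
  { apply Rmult_le_reg_r with (1 - x)%R. lra. unfold Rdiv. rewrite Rmult_1_l, Rinv_l by lra. nra. }
  lra.
Qed.

Lemma prod_tail (P e : nat -> C) (K : R) (J : nat) : (1 <= J)%nat -> (0 <= K)%R ->
  (forall m, (J <= m)%nat -> P (S m) = P m * (1 + e m)) ->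
  (forall m, (J <= m)%nat -> (Cmod (e m) <= K / (INR m * INR (S m)))%R) ->
  forall p d, (J <= p)%nat ->
  (Cmod (P (p + d)%nat - P p) <= Cmod (P p) * (exp (K / INR p - K / INR (p + d)) - 1))%R.
Proof.
  intros HJ HK HP He p d Hp. induction d as [|d IH].
  - rewrite Nat.add_0_r. replace (P p - P p) with (RtoC 0) by ring. rewrite Cmod_0.
    replace (K / INR p - K / INR p)%R with 0%R by ring. rewrite exp_0. lra.
  - replace (p + S d)%nat with (S (p + d)) by lia. rewrite HP by lia.
    set (q := (p + d)%nat) in *.
    replace (P q * (1 + e q) - P p) with ((P q - P p) * (1 + e q) + P p * e q) by ring.
    eapply Rle_trans. apply Cmod_triangle. rewrite !Cmod_mult.
    assert (Hq : (0 < INR q)%R) by (apply lt_0_INR; unfold q; lia).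
    assert (Hpp : (0 < INR p)%R) by (apply lt_0_INR; lia).
    assert (Hpq : (INR p <= INR q)%R) by (apply le_INR; unfold q; lia).
    set (S0 := (K / INR p - K / INR q)%R) in *.
    set (dl := (K / (INR q * INR (S q)))%R).
    assert (E : (K / INR p - K / INR (S q) = S0 + dl)%R) by (unfold S0, dl; rewrite S_INR; field; lra).
    rewrite E.
    assert (HS0 : (0 <= S0)%R).
    { unfold S0. assert (K / INR q <= K / INR p)%R. { unfold Rdiv. apply Rmult_le_compat_l. lra. apply Rinv_le_contravar; lra. } lra. }
    assert (Hed : (Cmod (e q) <= dl)%R) by (apply He; unfold q; lia).
    assert (H1 : (1 + Cmod (1 + e q) <= 2 + Cmod (e q))%R).
    { pose proof (Cmod_triangle 1 (e q)). rewrite Cmod_1 in H. lra. }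
    assert (H2 : (Cmod (1 + e q) <= 1 + dl)%R).
    { pose proof (Cmod_triangle 1 (e q)). rewrite Cmod_1 in H. lra. }
    assert (H3 : (1 + dl <= exp dl)%R) by apply exp_ineq1_le.
    assert (H4 : (1 <= exp S0)%R) by (rewrite <- exp_0; apply exp_le_mono; lra).
    rewrite exp_plus.
    pose proof (Cmod_ge_0 (P q - P p)). pose proof (Cmod_ge_0 (P p)). pose proof (Cmod_ge_0 (1 + e q)). pose proof (Cmod_ge_0 (e q)).
    set (D := Cmod (P q - P p)) in *. set (A := Cmod (P p)) in *. set (X := Cmod (1 + e q)) in *. set (Y := Cmod (e q)) in *.
    set (ES := exp S0) in *. set (ED := exp dl) in *.
    assert (D * X <= A * (ES - 1) * (1 + dl))%R.
    { apply Rmult_le_compat; lra. }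
    assert (A * Y <= A * dl)%R by (apply Rmult_le_compat_l; lra).
    assert (A * (ES - 1) * (1 + dl) + A * dl <= A * (ES * ED - 1))%R.
    { assert (ES * (1 + dl) <= ES * ED)%R by (apply Rmult_le_compat_l; lra). nra. }
    lra.
Qed.

Lemma prod_conv (P e : nat -> C) (K : R) (J : nat) : (1 <= J)%nat -> (0 <= K)%R ->
  (forall m, (J <= m)%nat -> P (S m) = P m * (1 + e m)) ->
  (forall m, (J <= m)%nat -> (Cmod (e m) <= K / (INR m * INR (S m)))%R) ->
  (forall m, (J <= m)%nat -> P m <> 0) ->
  exists L : C, L <> 0 /\ conv P L.
Proof.
  intros HJ HK HP He Hnz.
  assert (T := prod_tail P e K J HJ HK HP He).
  assert (T2 : forall p r, (J <= p)%nat -> (p <= r)%nat -> (Cmod (P r - P p) <= Cmod (P p) * (exp (K / INR p) - 1))%R).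
  { intros p r Hp Hr. replace r with (p + (r - p))%nat by lia. eapply Rle_trans. apply T. exact Hp.
    apply Rmult_le_compat_l. apply Cmod_ge_0.
    assert (0 <= K / INR (p + (r - p)))%R by (apply Rdiv_le_0_compat; [lra|apply lt_0_INR; lia]).
    assert (exp (K / INR p - K / INR (p + (r - p))) <= exp (K / INR p))%R by (apply exp_le_mono; lra). lra. }
  set (M := (Cmod (P J) * exp (K / INR J))%R).
  assert (HM : forall r, (J <= r)%nat -> (Cmod (P r) <= M)%R).
  { intros r Hr. pose proof (T2 J r ltac:(lia) Hr). unfold M.
    replace (P r) with ((P r - P J) + P J) by ring. eapply Rle_trans. apply Cmod_triangle. lra. }
  assert (HM0 : (0 <= M)%R) by (unfold M; pose proof (Cmod_ge_0 (P J)); pose proof (exp_pos (K / INR J)); nra).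
  assert (HC : cauchy_seq P).
  { intros eps Heps.
    destruct (nat_gt_ge (2 * K + 4 * M * K / eps + 1) J) as [N [HNJ HN]].
    assert (HN0 : (0 < INR N)%R) by (apply lt_0_INR; lia).
    assert (HKN : (0 <= K / INR N <= 1/2)%R).
    { split. apply Rdiv_le_0_compat; lra. apply Rmult_le_reg_r with (INR N). lra. unfold Rdiv. rewrite Rmult_assoc, Rinv_l by lra.
      assert (0 <= 4 * M * K / eps)%R by (apply Rdiv_le_0_compat; [nra|lra]). lra. }
    assert (Hsm : (4 * M * K / INR N < eps)%R).
    { apply Rmult_lt_reg_r with (INR N). lra. unfold Rdiv. rewrite Rmult_assoc, Rinv_l by lra.
      assert (4 * M * K = eps * (4 * M * K / eps))%R by (field; lra).
      assert (0 <= 4 * M * K / eps)%R by (apply Rdiv_le_0_compat; [nra|lra]). nra. }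
    exists N. intros p q Hp Hq.
    assert (B : forall r, (N <= r)%nat -> (Cmod (P r - P N) <= M * (2 * (K / INR N)))%R).
    { intros r Hr. eapply Rle_trans. apply T2; lia. pose proof (exp_sub1_le _ HKN).
      pose proof (HM N HNJ). pose proof (Cmod_ge_0 (P N)).
      assert (0 <= exp (K / INR N) - 1)%R. { assert (1 <= exp (K / INR N))%R by (rewrite <- exp_0; apply exp_le_mono; lra). lra. }
      apply Rmult_le_compat; lra. }
    eapply Rle_lt_trans. apply (Cmod_sub_tri _ (P N)). rewrite (Cmod_sub_sym (P N)).
    pose proof (B p Hp). pose proof (B q Hq). unfold Rdiv in *. lra. }
  exists (Clim P). split; [|apply cauchy_Clim; exact HC].
  intros HL0. assert (Hc := cauchy_Clim P HC). rewrite HL0 in Hc.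
  destruct (nat_gt_ge (4 * K) J) as [p0 [Hp0J Hp0]].
  assert (Hp00 : (0 < INR p0)%R) by (apply lt_0_INR; lia).
  assert (Hk4 : (K / INR p0 <= 1/4)%R).
  { apply Rmult_le_reg_r with (INR p0). lra. unfold Rdiv. rewrite Rmult_assoc, Rinv_l by lra. lra. }
  assert (Hkp : (0 <= K / INR p0 <= 1/2)%R).
  { split. apply Rdiv_le_0_compat; lra. lra. }
  assert (Ha : (0 < Cmod (P p0))%R) by (apply Cmod_gt_0; apply Hnz; exact Hp0J).
  destruct (Hc (Cmod (P p0) / 2)%R ltac:(lra)) as [N HN].
  specialize (HN (N + p0)%nat ltac:(lia)).
  replace (P (N + p0)%nat - 0) with (P (N + p0)%nat) in HN by ring.
  pose proof (T2 p0 (N + p0)%nat Hp0J ltac:(lia)) as Tb.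
  pose proof (exp_sub1_le _ Hkp).
  assert (Cmod (P (N + p0)%nat - P p0) <= Cmod (P p0) * (1/2))%R.
  { eapply Rle_trans. exact Tb. apply Rmult_le_compat_l; lra. }
  assert (Cmod (P p0) <= Cmod (P (N + p0)%nat) + Cmod (P (N + p0)%nat - P p0))%R.
  { replace (P p0) with (P (N + p0)%nat + - (P (N + p0)%nat - P p0)) at 1 by ring.
    eapply Rle_trans. apply Cmod_triangle. rewrite Cmod_opp. lra. }
  lra.
Qed.

Lemma Ceq_pair (z : C) (x y : R) : fst z = x -> snd z = y -> z = (x, y).
Proof. intros H1 H2. destruct z. simpl in *. subst. reflexivity. Qed.

Lemma Cmod_le_sum (z : C) : (Cmod z <= Rabs (fst z) + Rabs (snd z))%R.
Proof.
  unfold Cmod. rewrite <- (sqrt_pow2 (Rabs (fst z) + Rabs (snd z))) by (pose proof (Rabs_pos (fst z)); pose proof (Rabs_pos (snd z)); lra).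
  apply sqrt_le_1_alt. pose proof (Rabs_pos (fst z)); pose proof (Rabs_pos (snd z)).
  rewrite <- (pow2_abs (fst z)), <- (pow2_abs (snd z)). nra.
Qed.

Lemma im_le_Cmod' (c : C) : (Rabs (Im c) <= Cmod c)%R.
Proof.
  pose proof (Cmod2_alt c). pose proof (Cmod_ge_0 c). rewrite <- (pow2_abs (Im c)) in H.
  pose proof (Rabs_pos (Im c)). pose proof (pow2_ge_0 (Re c)). nra.
Qed.

Lemma Rcpow_add1 (a : R) (w : C) : (0 < a)%R -> Rcpow a (w + 1) = RtoC a * Rcpow a w.
Proof.
  intros Ha. unfold Rcpow. destruct w as [w1 w2]. unfold RtoC, Cmult, Cplus. simpl.
  replace ((w1 + 1) * ln a)%R with (w1 * ln a + ln a)%R by ring. replace ((w2 + 0) * ln a)%R with (w2 * ln a)%R by ring.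
  rewrite exp_plus, exp_ln by exact Ha. f_equal; ring.
Qed.

Lemma Rcpow_1 (a : R) : (0 < a)%R -> Rcpow a 1 = RtoC a.
Proof.
  intros Ha. unfold Rcpow, RtoC. simpl. replace (1 * ln a)%R with (ln a) by ring. replace (0 * ln a)%R with 0%R by ring.
  rewrite exp_ln, cos_0, sin_0 by exact Ha. f_equal; ring.
Qed.

Lemma Rcpow_mult (a b : R) (w : C) : (0 < a)%R -> (0 < b)%R -> Rcpow (a * b) w = Rcpow a w * Rcpow b w.
Proof.
  intros Ha Hb. unfold Rcpow. destruct w as [w1 w2]. unfold Cmult. simpl. rewrite ln_mult by assumption.
  rewrite !Rmult_plus_distr_l, exp_plus, cos_plus, sin_plus. f_equal; ring.
Qed.

Lemma Rcpow_nz (a : R) (w : C) : Rcpow a w <> 0.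
Proof.
  unfold Rcpow. intros E. pose proof (exp_pos (Re w * ln a)) as He.
  assert (E1 := f_equal (@fst R R) E). assert (E2 := f_equal (@snd R R) E). simpl in E1, E2.
  pose proof (sin2_cos2 (Im w * ln a)). unfold Rsqr in H.
  assert (cos (Im w * ln a) = 0)%R by (apply (Rmult_eq_reg_l (exp (Re w * ln a))); lra).
  assert (sin (Im w * ln a) = 0)%R by (apply (Rmult_eq_reg_l (exp (Re w * ln a))); lra).
  rewrite H0, H1 in H. lra.
Qed.

Lemma cos_b (b : R) : (Rabs b <= 1/2)%R -> (Rabs (cos b - 1) <= b ^ 2 / 2)%R.
Proof.
  intros Hb. apply Rabs_le_between in Hb.
  destruct (pre_cos_bound b 0 ltac:(lra) ltac:(lra)) as [H1 _].
  assert (E : cos_approx b (2 * 0 + 1) = (1 - b^2/2)%R) by (unfold cos_approx; simpl; unfold cos_term; simpl; field).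
  rewrite E in H1. pose proof (COS_bound b). apply Rabs_le_between. lra.
Qed.

Lemma sin_b_pos (b : R) : (0 <= b <= 1/2)%R -> (Rabs (sin b - b) <= b ^ 2 / 12)%R.
Proof.
  intros Hb. destruct (pre_sin_bound b 0 ltac:(lra) ltac:(lra)) as [H1 H2].
  assert (E1 : sin_approx b (2 * 0 + 1) = (b - b^3/6)%R) by (unfold sin_approx; simpl; unfold sin_term; simpl; field).
  assert (E2 : sin_approx b (2 * (0 + 1)) = (b - b^3/6 + b^5/120)%R) by (unfold sin_approx; simpl; unfold sin_term; simpl; field).
  rewrite E1 in H1. rewrite E2 in H2. apply Rabs_le_between.
  assert (b^3 <= b^2 / 2)%R by nra. assert (b^5 <= b^3)%R by nra. assert (0 <= b^3)%R by nra. lra.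
Qed.

Lemma sin_b (b : R) : (Rabs b <= 1/2)%R -> (Rabs (sin b - b) <= b ^ 2 / 12)%R.
Proof.
  intros Hb. destruct (Rle_or_lt 0 b) as [H|H].
  - apply sin_b_pos. apply Rabs_le_between in Hb. lra.
  - replace b with (- (- b))%R by ring. rewrite sin_neg.
    replace (- sin (- b) - - - b)%R with (- (sin (- b) - (- b)))%R by ring. rewrite Rabs_Ropp.
    replace ((- - b) ^ 2)%R with ((- b) ^ 2)%R by ring. apply sin_b_pos. apply Rabs_le_between in Hb. lra.
Qed.

Lemma exp_b (a : R) : (Rabs a <= 1/2)%R -> (0 <= exp a - 1 - a <= 2 * a ^ 2)%R.
Proof.
  intros Ha. apply Rabs_le_between in Ha. pose proof (exp_ineq1_le a). pose proof (exp_le_inv a ltac:(lra)).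
  split. lra.
  assert (1 / (1 - a) <= 1 + a + 2 * a^2)%R.
  { apply Rmult_le_reg_r with (1 - a)%R. lra. unfold Rdiv. rewrite Rmult_1_l, Rinv_l by lra. nra. }
  lra.
Qed.

Lemma Ebound (a b : R) : (Rabs a <= 1/2)%R -> (Rabs b <= 1/2)%R ->
  (Cmod ((exp a * cos b, exp a * sin b)%R - 1 - (a, b)) <= 4 * (a ^ 2 + b ^ 2))%R.
Proof.
  intros Ha Hb. set (z := (exp a * cos b, exp a * sin b)%R - 1 - (a, b)).
  assert (Hf : fst z = ((exp a - 1 - a) + exp a * (cos b - 1))%R) by (unfold z; simpl; ring).
  assert (Hs : snd z = ((exp a - 1) * sin b + (sin b - b))%R) by (unfold z; simpl; ring).
  eapply Rle_trans. apply Cmod_le_sum. rewrite Hf, Hs.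
  pose proof (exp_b a Ha) as E. pose proof (cos_b b Hb) as Cb. pose proof (sin_b b Hb) as Sb.
  pose proof (exp_pos a) as Ep.
  assert (Ea : (Rabs (exp a - 1) <= 2 * Rabs a)%R).
  { apply Rabs_le_between in Ha. apply Rabs_le_between. split.
    - destruct (Rle_or_lt 0 a); [rewrite Rabs_pos_eq by lra | rewrite Rabs_left by lra]; nra.
    - destruct (Rle_or_lt 0 a); [rewrite Rabs_pos_eq by lra | rewrite Rabs_left by lra]; nra. }
  assert (E2 : (exp a <= 2)%R) by (apply Rabs_le_between in Ha; nra).
  assert (Sa : (Rabs (sin b) <= 2 * Rabs b)%R).
  { replace (sin b) with ((sin b - b) + b)%R by ring. eapply Rle_trans. apply Rabs_triang.
    assert (b^2/12 <= Rabs b)%R. { rewrite <- (pow2_abs b). pose proof (Rabs_pos b). nra. } lra. }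
  eapply Rle_trans. apply Rplus_le_compat; apply Rabs_triang.
  rewrite !Rabs_mult. rewrite (Rabs_pos_eq (exp a)) by lra. rewrite (Rabs_pos_eq (exp a - 1 - a)) by lra.
  pose proof (Rabs_pos (cos b - 1)). pose proof (Rabs_pos (exp a - 1)). pose proof (Rabs_pos (sin b)).
  pose proof (Rabs_pos a). pose proof (Rabs_pos b).
  assert (T1 : (exp a * Rabs (cos b - 1) <= 2 * (b^2/2))%R) by (apply Rmult_le_compat; lra).
  assert (T2 : (Rabs (exp a - 1) * Rabs (sin b) <= (2 * Rabs a) * (2 * Rabs b))%R) by (apply Rmult_le_compat; lra).
  assert (T3 : (4 * Rabs a * Rabs b <= 2 * a^2 + 2 * b^2)%R).
  { rewrite <- (pow2_abs a), <- (pow2_abs b). pose proof (pow2_ge_0 (Rabs a - Rabs b)). nra. }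
  lra.
Qed.

Lemma div_le (a b c : R) : (0 < c)%R -> (a <= b * c)%R -> (a / c <= b)%R.
Proof. intros Hc H. unfold Rdiv. apply Rmult_le_reg_r with c. exact Hc. rewrite Rmult_assoc, Rinv_l by lra. lra. Qed.

Lemma ln_bounds (x : R) : (1 <= x)%R -> (1 / (x + 1) <= ln ((x + 1) / x) <= 1 / x)%R.
Proof.
  intros Hx. split.
  - assert (E : (ln ((x + 1) / x) + ln (x / (x + 1)) = 0)%R).
    { rewrite <- ln_mult by (apply Rdiv_lt_0_compat; lra). replace ((x + 1) / x * (x / (x + 1)))%R with 1%R by (field; lra). apply ln_1. }
    assert (ln (x / (x + 1)) <= - (1 / (x + 1)))%R.
    { rewrite <- (ln_exp (- (1 / (x + 1)))). apply ln_le. apply Rdiv_lt_0_compat; lra.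
      pose proof (exp_ineq1_le (- (1 / (x + 1)))). replace (x / (x + 1))%R with (1 + - (1 / (x + 1)))%R by (field; lra). lra. }
    lra.
  - rewrite <- (ln_exp (1 / x)). apply ln_le. apply Rdiv_lt_0_compat; lra.
    pose proof (exp_ineq1_le (1 / x)). replace ((x + 1) / x)%R with (1 + 1 / x)%R by (field; lra). lra.
Qed.

Lemma Cdiv_nz (a b : C) : a <> 0 -> b <> 0 -> a / b <> 0.
Proof. intros Ha Hb E. apply Ha. transitivity (a / b * b). field. exact Hb. rewrite E. ring. Qed.

Lemma Cmult_nz (a b : C) : a <> 0 -> b <> 0 -> a * b <> 0.
Proof. intros Ha Hb E. apply Ha. transitivity (a * b / b). field. exact Hb. rewrite E. field. exact Hb. Qed.

Lemma gamma_e_bound (w : C) (m : nat) : (1 <= m)%nat -> (2 * Cmod w <= INR m)%R ->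
  (Cmod (RtoC (INR (S m)) * Rcpow (INR (S m) / INR m) w / (w + RtoC (INR (S m))) - 1)
    <= (16 * Cmod w ^ 2 + 2 * Cmod w) / (INR m * INR (S m)))%R.
Proof.
  intros Hm1 Hm.
  set (x := INR m) in *. assert (Hx : (1 <= x)%R) by (unfold x; apply (le_INR 1); lia).
  assert (HS : INR (S m) = (x + 1)%R) by (unfold x; apply S_INR). rewrite HS.
  set (W := Cmod w) in *. assert (HW : (0 <= W)%R) by apply Cmod_ge_0.
  set (l := ln ((x + 1) / x)).
  destruct (ln_bounds x Hx) as [Hl1 Hl2]. fold l in Hl1, Hl2.
  assert (Hl0 : (0 <= l)%R) by (assert (0 < 1 / (x + 1))%R by (apply Rdiv_lt_0_compat; lra); lra).
  set (Q := Rcpow ((x + 1) / x) w).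
  set (u := (Re w * l, Im w * l)%R).
  assert (HQ : Q = (exp (Re w * l) * cos (Im w * l), exp (Re w * l) * sin (Im w * l))%R) by reflexivity.
  assert (Hlx : (W * l <= 1/2)%R).
  { assert (W * l <= W * (1 / x))%R by (apply Rmult_le_compat_l; lra).
    assert (W * (1 / x) <= 1/2)%R. { replace (W * (1 / x))%R with (W / x)%R by (field; lra). apply div_le; lra. }
    lra. }
  assert (Hre : (Rabs (Re w * l) <= 1/2)%R).
  { rewrite Rabs_mult, (Rabs_pos_eq l) by lra. pose proof (re_le_Cmod w). fold W in H. nra. }
  assert (Him : (Rabs (Im w * l) <= 1/2)%R).
  { rewrite Rabs_mult, (Rabs_pos_eq l) by lra. pose proof (im_le_Cmod' w). fold W in H. nra. }
  assert (Eb := Ebound _ _ Hre Him). rewrite <- HQ in Eb. fold u in Eb.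
  assert (Hsq : ((Re w * l) ^ 2 + (Im w * l) ^ 2 = W ^ 2 * l ^ 2)%R).
  { unfold W. rewrite Cmod2_alt. ring. }
  rewrite Hsq in Eb.
  assert (Hu : u = w * RtoC l) by (unfold u; destruct w; unfold Cmult, RtoC; simpl; f_equal; ring).
  assert (Hden : (x + 1 - W <= Cmod (w + RtoC (x + 1)))%R).
  { pose proof (Cmod_lower (S m) w) as H. rewrite HS in H. fold W in H.
    replace (w + RtoC (x + 1)) with (RtoC (x + 1) + w) by ring. exact H. }
  assert (Hd0 : w + RtoC (x + 1) <> 0) by (apply Cmod_gt_0; lra).
  replace (RtoC (x + 1) * Q / (w + RtoC (x + 1)) - 1)
    with ((RtoC (x + 1) * (Q - 1 - u) + RtoC ((x + 1) * l - 1) * w) / (w + RtoC (x + 1))).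
  2: { rewrite Hu. rewrite RtoC_minus, RtoC_mult. field. exact Hd0. }
  rewrite Cmod_div by exact Hd0.
  set (A := Cmod (RtoC (x + 1) * (Q - 1 - u) + RtoC ((x + 1) * l - 1) * w)).
  assert (HA : (A <= (x + 1) * (4 * (W ^ 2 * l ^ 2)) + ((x + 1) * l - 1) * W)%R).
  { unfold A. eapply Rle_trans. apply Cmod_triangle. rewrite !Cmod_mult, !Cmod_R.
    rewrite (Rabs_pos_eq (x + 1)) by lra.
    assert (Hp : (0 <= (x + 1) * l - 1)%R).
    { assert ((x + 1) * (1 / (x + 1)) <= (x + 1) * l)%R by (apply Rmult_le_compat_l; lra).
      replace ((x + 1) * (1 / (x + 1)))%R with 1%R in H by (field; lra). lra. }
    rewrite (Rabs_pos_eq _ Hp). fold W. apply Rplus_le_compat_r. apply Rmult_le_compat_l; lra. }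
  set (D := Cmod (w + RtoC (x + 1))) in *.
  assert (HD : ((x + 1) / 2 <= D)%R) by lra.
  assert (Hl2' : ((x + 1) * l - 1 <= 1 / x)%R).
  { assert ((x + 1) * l <= (x + 1) * (1 / x))%R by (apply Rmult_le_compat_l; lra).
    replace ((x + 1) * (1 / x))%R with (1 + 1 / x)%R in H by (field; lra). lra. }
  assert (Hll : (l ^ 2 <= 1 / x ^ 2)%R).
  { replace (1 / x ^ 2)%R with ((1 / x) ^ 2)%R by (field; lra). apply pow_incr. lra. }
  assert (HA2 : (A <= 8 * W ^ 2 / x + W / x)%R).
  { eapply Rle_trans. exact HA.
    assert ((x + 1) * (4 * (W ^ 2 * l ^ 2)) <= (x + 1) * (4 * (W ^ 2 * (1 / x ^ 2))))%R.
    { apply Rmult_le_compat_l. lra. apply Rmult_le_compat_l. lra. apply Rmult_le_compat_l. nra. exact Hll. }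
    assert ((x + 1) * (4 * (W ^ 2 * (1 / x ^ 2))) <= 8 * W ^ 2 / x)%R.
    { replace ((x + 1) * (4 * (W ^ 2 * (1 / x ^ 2))))%R with (4 * W ^ 2 * ((x + 1) / x) * (1 / x))%R by (field; lra).
      replace (8 * W ^ 2 / x)%R with (4 * W ^ 2 * 2 * (1 / x))%R by (field; lra).
      apply Rmult_le_compat_r. apply Rlt_le, Rdiv_lt_0_compat; lra.
      apply Rmult_le_compat_l. nra. apply div_le; lra. }
    assert (((x + 1) * l - 1) * W <= W / x)%R.
    { replace (W / x)%R with ((1 / x) * W)%R by (field; lra). apply Rmult_le_compat_r; lra. }
    lra. }
  apply Rmult_le_reg_r with D. lra. unfold Rdiv at 1. rewrite Rmult_assoc, Rinv_l by lra. rewrite Rmult_1_r.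
  eapply Rle_trans. exact HA2.
  assert (Hk : (0 <= (16 * W ^ 2 + 2 * W) / (x * (x + 1)))%R).
  { apply Rdiv_le_0_compat. nra. nra. }
  eapply Rle_trans with ((16 * W ^ 2 + 2 * W) / (x * (x + 1)) * ((x + 1) / 2))%R.
  - right. field. lra.
  - apply Rmult_le_compat_l; lra.
Qed.

Lemma Gamma_conv (w : C) : (forall j : nat, w + RtoC (INR j) <> 0) ->
  exists L : C, L <> 0 /\ conv (fun m => RtoC (INR (fact m)) * Rcpow (INR m) w / Cpoch0 w m) L.
Proof.
  intros Hw. destruct (nat_gt_ge (2 * Cmod w) 1) as [J [HJ1 HJ]].
  apply (prod_conv _ (fun m => RtoC (INR (S m)) * Rcpow (INR (S m) / INR m) w / (w + RtoC (INR (S m))) - 1)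
           (16 * Cmod w ^ 2 + 2 * Cmod w) J HJ1).
  - pose proof (Cmod_ge_0 w). nra.
  - intros m Hm. assert (Hm0 : (0 < INR m)%R) by (apply lt_0_INR; lia).
    assert (HR : Rcpow (INR (S m)) w = Rcpow (INR m) w * Rcpow (INR (S m) / INR m) w).
    { rewrite <- Rcpow_mult. f_equal. field. lra. lra. apply Rdiv_lt_0_compat. apply lt_0_INR; lia. lra. }
    change (Cpoch0 w (S m)) with (Cpoch0 w m * (w + RtoC (INR (S m)))).
    rewrite fact_simpl, mult_INR, RtoC_mult, HR.
    field. split. apply Hw. apply Cpoch0_nz. exact Hw.
  - intros m Hm. apply gamma_e_bound. lia. apply Rlt_le. eapply Rlt_le_trans. exact HJ. apply le_INR. exact Hm.
  - intros m Hm. apply Cdiv_nz. apply Cmult_nz.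
    apply (RtoC_nz _ (INR_fact_neq_0 m)). apply Rcpow_nz.
    apply Cpoch0_nz. exact Hw.
Qed.

Lemma conv_ratio (c : C) : (forall m : nat, RtoC (INR m) + c <> 0) ->
  conv (fun m => RtoC (INR m) / (RtoC (INR m) + c)) 1.
Proof.
  intros Hc. apply (conv_ext _ (fun m => 1 - c / (RtoC (INR m) + c)) _ 0).
  { intros m _. field. apply Hc. }
  assert (H := conv_minus _ _ _ _ (conv_const 1) (conv_inv c c)).
  replace (1 - 0) with (RtoC 1) in H by ring. exact H.
Qed.

Lemma CGamma_rec (w : C) : (forall j : nat, w + RtoC (INR j) <> 0) ->
  CGamma w <> 0 /\ CGamma (w + 1) = w * CGamma w.
Proof.
  intros Hw. destruct (Gamma_conv w Hw) as [L [HL Hc]].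
  assert (E : CGamma w = L) by (unfold CGamma; apply conv_Clim; exact Hc).
  rewrite E. split. exact HL.
  unfold CGamma. apply conv_Clim.
  replace (w * L) with (w * L * 1) by ring.
  apply (conv_ext _ (fun m => (w * (RtoC (INR (fact m)) * Rcpow (INR m) w / Cpoch0 w m)) * (RtoC (INR m) / (RtoC (INR m) + (w + 1)))) _ 1).
  - intros m Hm. assert (Hm0 : (0 < INR m)%R) by (apply lt_0_INR; lia).
    rewrite Rcpow_add1 by exact Hm0.
    assert (HP : Cpoch0 (w + 1) m = Cpoch0 w m * (w + RtoC (INR (S m))) / w).
    { assert (Hw0 : w <> 0) by (specialize (Hw 0%nat); simpl INR in Hw; intro Z; apply Hw; rewrite Z; ring).
      change (Cpoch0 w m * (w + RtoC (INR (S m)))) with (Cpoch0 w (S m)). rewrite Cpoch0_shift. field. exact Hw0. }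
    rewrite HP. rewrite INR_S_C.
    assert (Hw0 : w <> 0) by (specialize (Hw 0%nat); simpl INR in Hw; intro Z; apply Hw; rewrite Z; ring).
    assert (H1 : w + (RtoC (INR m) + 1) <> 0) by (rewrite <- INR_S_C; apply Hw).
    assert (H2 : RtoC (INR m) + (w + 1) <> 0) by (intro Z; apply H1; rewrite <- Z; ring).
    assert (H3 := Cpoch0_nz w m Hw).
    field. repeat split; assumption.
  - apply conv_mult. apply conv_scal. exact Hc. apply conv_ratio.
    intros m Z. apply (Hw (S m)). rewrite INR_S_C. rewrite <- Z. ring.
Qed.

Lemma Cpoch0_fact (k m : nat) :
  RtoC (INR (fact k)) * Cpoch0 (RtoC (INR k) + 1) m = RtoC (INR (fact (k + m + 1))).
Proof.
  induction m as [|m IH].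
  - simpl Cpoch0. replace (k + 0 + 1)%nat with (S k) by lia. rewrite fact_simpl, mult_INR, RtoC_mult, INR_S_C. ring.
  - change (Cpoch0 (RtoC (INR k) + 1) (S m)) with (Cpoch0 (RtoC (INR k) + 1) m * (RtoC (INR k) + 1 + RtoC (INR (S m)))).
    replace (k + S m + 1)%nat with (S (k + m + 1)) by lia. rewrite fact_simpl, mult_INR, RtoC_mult.
    rewrite <- IH. replace (S (k + m + 1)) with (k + S m + 1)%nat by lia. rewrite !INR_plus_C. simpl (INR 1). cring.
Qed.

Lemma CGamma_poch (w : C) (m : nat) : (forall j : nat, w + RtoC (INR j) <> 0) ->
  CGamma (w + RtoC (INR (S m))) = Cpoch0 w m * CGamma w.
Proof.
  intros Hw. induction m as [|m IH].
  - simpl INR. destruct (CGamma_rec w Hw) as [_ E]. rewrite E. reflexivity.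
  - rewrite (INR_S_C (S m)). replace (w + (RtoC (INR (S m)) + 1)) with ((w + RtoC (INR (S m))) + 1) by ring.
    destruct (CGamma_rec (w + RtoC (INR (S m)))) as [_ E].
    { intros j. replace (w + RtoC (INR (S m)) + RtoC (INR j)) with (w + RtoC (INR (S m + j))) by (rewrite INR_plus_C; ring). apply Hw. }
    rewrite E, IH. change (Cpoch0 w (S m)) with (Cpoch0 w m * (w + RtoC (INR (S m)))). ring.
Qed.

Lemma one_plus_INR_nz (j : nat) : 1 + RtoC (INR j) <> 0.
Proof. rewrite <- RtoC_plus. apply RtoC_nz. pose proof (pos_INR j). lra. Qed.

Lemma CGamma_1 : CGamma 1 = 1.
Proof.
  unfold CGamma. apply conv_Clim.
  apply (conv_ext _ (fun m => RtoC (INR m) / (RtoC (INR m) + 1)) _ 1).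
  - intros m Hm. assert (Hm0 : (0 < INR m)%R) by (apply lt_0_INR; lia). rewrite Rcpow_1 by exact Hm0.
    assert (E := Cpoch0_fact 0 m). simpl (fact 0) in E. simpl (INR 0) in E. simpl (INR 1) in E.
    replace (RtoC 0 + 1) with (RtoC 1) in E by (unfold RtoC, Cplus; simpl; f_equal; ring).
    replace (0 + m + 1)%nat with (S m) in E by lia. rewrite fact_simpl, mult_INR, RtoC_mult in E.
    assert (Hp : Cpoch0 1 m = RtoC (INR (S m)) * RtoC (INR (fact m))).
    { rewrite <- E. ring. }
    rewrite Hp, INR_S_C. assert (Hf := RtoC_nz _ (INR_fact_neq_0 m)).
    assert (H1 : RtoC (INR m) + 1 <> 0) by (rewrite <- INR_S_C; apply RtoC_nz; apply not_0_INR; lia).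
    field. split; assumption.
  - apply conv_ratio. intros m. rewrite Cplus_comm. apply one_plus_INR_nz.
Qed.

Lemma CGamma_nat (d : nat) : CGamma (RtoC (INR d) + 1) = RtoC (INR (fact d)).
Proof.
  destruct d as [|m].
  - simpl. replace (RtoC 0 + 1) with (RtoC 1) by (unfold RtoC, Cplus; simpl; f_equal; ring). apply CGamma_1.
  - replace (RtoC (INR (S m)) + 1) with (1 + RtoC (INR (S m))) by ring.
    rewrite CGamma_poch by apply one_plus_INR_nz. rewrite CGamma_1.
    assert (E := Cpoch0_fact 0 m). simpl (fact 0) in E. simpl (INR 0) in E. simpl (INR 1) in E.
    replace (RtoC 0 + 1) with (RtoC 1) in E by (unfold RtoC, Cplus; simpl; f_equal; ring).
    replace (0 + m + 1)%nat with (S m) in E by lia. rewrite <- E. ring.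
Qed.

Lemma Cbinom_eval (n k : nat) (s : C) : (k <= n)%nat -> (forall j : nat, RtoC (INR j) + s <> 0) ->
  (RtoC (INR k) + s) * Cbinom (RtoC (INR n) + s) (RtoC (INR k) + s)
  = Cpoch0 (RtoC (INR k) + s) (n - k) / RtoC (INR (fact (n - k))).
Proof.
  intros Hk Hs. set (y := RtoC (INR k) + s). set (d := (n - k)%nat).
  assert (Hy : forall j : nat, y + RtoC (INR j) <> 0).
  { intros j. unfold y. replace (RtoC (INR k) + s + RtoC (INR j)) with (RtoC (INR (k + j)) + s) by (rewrite INR_plus_C; ring). apply Hs. }
  assert (Hn : RtoC (INR n) = RtoC (INR k) + RtoC (INR d)) by (rewrite <- INR_plus_C; f_equal; f_equal; unfold d; lia).
  unfold Cbinom.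
  replace (RtoC (INR n) + s + 1) with (y + RtoC (INR (S d))) by (unfold y; rewrite Hn, INR_S_C; ring).
  replace (RtoC (INR n) + s - y + 1) with (RtoC (INR d) + 1) by (unfold y; rewrite Hn; ring).
  rewrite CGamma_poch by exact Hy. rewrite CGamma_nat.
  destruct (CGamma_rec y Hy) as [HG E]. rewrite E.
  assert (Hy0 : y <> 0) by (specialize (Hy 0%nat); simpl INR in Hy; intro Z; apply Hy; rewrite Z; ring).
  assert (Hf := RtoC_nz _ (INR_fact_neq_0 d)).
  field. repeat split; assumption.
Qed.

Ltac eqtr Z := match type of Z with ?X = _ => transitivity X; [ring|exact Z] end.

Definition hs (z : C) (N : nat) : C := sum_n_m (fun j => / RtoC (INR j) - / (RtoC (INR j) + z)) 1 N.

Lemma hs_S z N : hs z (S N) = hs z N + (/ RtoC (INR (S N)) - / (RtoC (INR (S N)) + z)).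
Proof. unfold hs. rewrite sum_n_Sm by lia. reflexivity. Qed.

Lemma hs_0 z : hs z 0 = 0.
Proof. unfold hs. rewrite sum_n_m_zero by lia. reflexivity. Qed.

Lemma hs_cauchy (z : C) : (forall j : nat, (1 <= j)%nat -> RtoC (INR j) + z <> 0) -> cauchy_seq (hs z).
Proof.
  intros Hz. destruct (nat_gt_ge (2 * Cmod z) 1) as [J [HJ1 HJ]].
  apply (add_cauchy _ (fun N => / RtoC (INR (S N)) - / (RtoC (INR (S N)) + z)) (4 * Cmod z) J HJ1).
  - pose proof (Cmod_ge_0 z). lra.
  - intros m _. apply hs_S.
  - intros m Hm. assert (Hm0 : (1 <= INR m)%R) by (apply (le_INR 1); lia).
    assert (HmJ : (INR J <= INR m)%R) by (apply le_INR; exact Hm).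
    assert (HS : INR (S m) = (INR m + 1)%R) by apply S_INR.
    assert (HSz : RtoC (INR (S m)) + z <> 0) by (apply Hz; lia).
    assert (HS0 : RtoC (INR (S m)) <> 0) by (apply RtoC_nz; apply not_0_INR; lia).
    replace (/ RtoC (INR (S m)) - / (RtoC (INR (S m)) + z)) with (z / (RtoC (INR (S m)) * (RtoC (INR (S m)) + z))) by (field; split; assumption).
    rewrite Cmod_div by (apply Cmult_nz; assumption). rewrite Cmod_mult, Cmod_INR.
    pose proof (Cmod_lower (S m) z) as Hl. rewrite HS in *.
    set (x := INR m) in *. set (Z := Cmod z) in *. assert (HZ : (0 <= Z)%R) by apply Cmod_ge_0.
    set (D := Cmod (RtoC (x + 1) + z)) in *.
    assert (HD : ((x + 1) / 2 <= D)%R) by lra.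
    apply div_le. nra.
    assert (Hk : (0 <= 4 * Z / (x * (x + 1)))%R) by (apply Rdiv_le_0_compat; nra).
    apply Rle_trans with (4 * Z / (x * (x + 1)) * ((x + 1) * ((x + 1) / 2)))%R.
    + replace (4 * Z / (x * (x + 1)) * ((x + 1) * ((x + 1) / 2)))%R with (2 * Z * ((x + 1) / x))%R by (field; lra).
      assert (1 <= (x + 1) / x)%R. { apply Rmult_le_reg_r with x. lra. unfold Rdiv. rewrite Rmult_assoc, Rinv_l by lra. lra. }
      nra.
    + apply Rmult_le_compat_l. exact Hk. apply Rmult_le_compat_l; lra.
Qed.

Lemma HC_shift (z : C) : (forall j : nat, RtoC (INR j) + z + 1 <> 0) -> (forall j : nat, (1 <= j)%nat -> RtoC (INR j) + z <> 0) ->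
  HC (z + 1) = HC z + / (z + 1).
Proof.
  intros Hz1 Hz.
  assert (Hc := cauchy_Clim _ (hs_cauchy z Hz)). fold (hs z) in Hc.
  assert (E : forall N, hs (z + 1) N = hs z N + / (z + 1) - 1 / (RtoC (INR N) + (z + 1))).
  { induction N as [|N IH].
    - rewrite !hs_0. simpl INR. assert (H := Hz1 0%nat). simpl INR in H.
      field. intro Z; apply H; eqtr Z.
    - rewrite !hs_S, IH. rewrite !INR_S_C.
      assert (H1 := Hz1 N). assert (H2 := Hz1 (S N)). rewrite INR_S_C in H2.
      assert (H3 : RtoC (INR N) + 1 <> 0) by (rewrite <- INR_S_C; apply RtoC_nz; apply not_0_INR; lia).
      assert (H4 : z + 1 <> 0) by (specialize (Hz1 0%nat); simpl INR in Hz1; intro Z; apply Hz1; eqtr Z).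
      field. repeat split; try assumption.
      all: intro Z; first [apply H1; eqtr Z | apply H2; eqtr Z]. }
  assert (Hc' : conv (hs z) (HC z)) by exact Hc.
  change (HC (z + 1)) with (Clim (hs (z + 1))). apply conv_Clim.
  apply (conv_ext _ (fun N => hs z N + / (z + 1) - 1 / (RtoC (INR N) + (z + 1))) _ 0).
  { intros. apply E. }
  replace (HC z + / (z + 1)) with (HC z + / (z + 1) - 0) by ring.
  apply conv_minus. apply conv_plus. exact Hc'. apply conv_const. apply conv_inv.
Qed.

Ltac cfield := match goal with |- @eq _ ?a ?b => change (@eq C a b) end; field.

Lemma sumC_opp (a : nat -> C) n m : sum_n_m (fun k => - a k) n m = - sum_n_m a n m.
Proof.
  transitivity (sum_n_m (fun k => (- (1)) * a k) n m). apply sum_n_m_ext. intros. cring.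
  rewrite sumC_mult_l. cring.
Qed.

Lemma binom_eval (n k : nat) : (k <= n)%nat ->
  RtoC (INR (k + 1)) * RtoC (Binomial.C (n + 1) (k + 1))
  = Cpoch0 (RtoC (INR k) + 1) (n - k) / RtoC (INR (fact (n - k))).
Proof.
  intros Hk. unfold Binomial.C.
  replace (n + 1 - (k + 1))%nat with (n - k)%nat by lia.
  assert (Ef : RtoC (INR (fact (n + 1))) = RtoC (INR (fact k)) * Cpoch0 (RtoC (INR k) + 1) (n - k)).
  { rewrite Cpoch0_fact. do 3 f_equal. lia. }
  replace (k + 1)%nat with (S k) by lia.
  rewrite RtoC_div by (apply Rmult_integral_contrapositive; split; apply INR_fact_neq_0).
  rewrite RtoC_mult, Ef, fact_simpl, mult_INR, RtoC_mult.
  assert (H1 := RtoC_nz _ (INR_fact_neq_0 k)). assert (H2 := RtoC_nz _ (INR_fact_neq_0 (n - k))).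
  assert (H3 : RtoC (INR (S k)) <> 0) by (apply RtoC_nz; apply not_0_INR; lia).
  field. repeat split; assumption.
Qed.

Theorem corollary8 (n l1 u1 l2 u2 : nat) (f g : nat -> C) (s : C)
  (Hu1 : (u1 <= n)%nat)
  (Hid : forall t : C,
      sum_n_m (fun k => f k * pow_n t k * pow_n (1 - t) (n - k)) l1 u1
      = sum_n_m (fun k => g k * pow_n t k) l2 u2)
  (Hs_neg : forall m : nat, s <> - RtoC (INR (S m)))
  (Hs0 : s <> 0) :
  sum_n_m (fun k => f k / ((RtoC (INR k) + s) *
                              Cbinom (RtoC (INR n) + s) (RtoC (INR k) + s))) l1 u1
    = sum_n_m (fun k => g k / (RtoC (INR k) + s)) l2 u2
  /\
  sum_n_m (fun k => f k / (RtoC (INR (k + 1)) *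
                              RtoC (Binomial.C (n + 1) (k + 1)))) l1 u1
    = sum_n_m (fun k => g k / RtoC (INR (k + 1))) l2 u2
  /\
  sum_n_m (fun k => f k * (Hnat (n - k) - HC (RtoC (INR n) + s)) /
                      ((RtoC (INR k) + s) *
                         Cbinom (RtoC (INR n) + s) (RtoC (INR k) + s))) l1 u1
    = - sum_n_m (fun k => g k * HC (RtoC (INR k) + s) / (RtoC (INR k) + s)) l2 u2
  /\
  sum_n_m (fun k => f k * (Hnat (n - k) - Hnat (n + 1)) /
                      (RtoC (INR (k + 1)) *
                         RtoC (Binomial.C (n + 1) (k + 1)))) l1 u1
    = - sum_n_m (fun k => g k * Hnat (k + 1) / RtoC (INR (k + 1))) l2 u2.
Proof.
  assert (Hs : forall j : nat, RtoC (INR j) + s <> 0).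
  { intros j Z. destruct j as [|j].
    - apply Hs0. simpl INR in Z. eqtr Z.
    - apply (Hs_neg j). transitivity (RtoC (INR (S j)) + s - RtoC (INR (S j))). ring. rewrite Z. ring. }
  assert (H1 : forall j : nat, RtoC (INR j) + 1 <> 0) by (intros j; rewrite Cplus_comm; apply one_plus_INR_nz).
  assert (Hhs : forall j, HC (RtoC (INR (S j)) + s) = HC (RtoC (INR j) + s) + / (RtoC (INR (S j)) + s)).
  { intros j. rewrite INR_S_C. replace (RtoC (INR j) + 1 + s) with (RtoC (INR j) + s + 1) by ring.
    apply HC_shift.
    - intros i. replace (RtoC (INR i) + (RtoC (INR j) + s) + 1) with (RtoC (INR (S (i + j))) + s)
        by (rewrite INR_S_C, INR_plus_C; ring). apply Hs.
    - intros i _. replace (RtoC (INR i) + (RtoC (INR j) + s)) with (RtoC (INR (i + j)) + s)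
        by (rewrite INR_plus_C; ring). apply Hs. }
  assert (Hh1 : forall j, Hnat (S j + 1) = Hnat (j + 1) + / (RtoC (INR (S j)) + 1)).
  { intros j. replace (S j + 1)%nat with (S (j + 1)) by lia. rewrite Hnat_S.
    rewrite (INR_S_C (j + 1)). replace (j + 1)%nat with (S j) by lia. reflexivity. }
  destruct (alg_main n l1 u1 l2 u2 f g Hu1 Hid s Hs (fun j => HC (RtoC (INR j) + s)) Hhs) as [A1 A3].
  destruct (alg_main n l1 u1 l2 u2 f g Hu1 Hid 1 H1 (fun j => Hnat (j + 1)) Hh1) as [A2 A4].
  assert (Hy : forall k, forall j : nat, (RtoC (INR k) + s) + RtoC (INR j) <> 0).
  { intros k j. replace (RtoC (INR k) + s + RtoC (INR j)) with (RtoC (INR (k + j)) + s) by (rewrite INR_plus_C; ring). apply Hs. }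
  assert (Hy1 : forall k, forall j : nat, (RtoC (INR k) + 1) + RtoC (INR j) <> 0).
  { intros k j. replace (RtoC (INR k) + 1 + RtoC (INR j)) with (RtoC (INR (k + j)) + 1) by (rewrite INR_plus_C; ring). apply H1. }
  split; [|split; [|split]].
  - transitivity (sum_n_m (fun k => f k * F (n - k) (RtoC (INR k) + s)) l1 u1).
    + apply sum_n_m_ext_loc. intros k Hk. rewrite Cbinom_eval by (auto; lia). unfold F.
      assert (HP := Cpoch0_nz _ (n - k) (Hy k)). assert (Hf := RtoC_nz _ (INR_fact_neq_0 (n - k))).
      cfield. split; assumption.
    + rewrite A1. reflexivity.
  - transitivity (sum_n_m (fun k => f k * F (n - k) (RtoC (INR k) + 1)) l1 u1).
    + apply sum_n_m_ext_loc. intros k Hk. rewrite binom_eval by lia. unfold F.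
      assert (HP := Cpoch0_nz _ (n - k) (Hy1 k)). assert (Hf := RtoC_nz _ (INR_fact_neq_0 (n - k))).
      cfield. split; assumption.
    + rewrite A2. apply sum_n_m_ext. intros k. rewrite INR_plus_C. reflexivity.
  - transitivity (- sum_n_m (fun k => f k * ((HC (RtoC (INR n) + s) - Hnat (n - k)) * F (n - k) (RtoC (INR k) + s))) l1 u1).
    + rewrite <- sumC_opp. apply sum_n_m_ext_loc. intros k Hk. rewrite Cbinom_eval by (auto; lia). unfold F.
      assert (HP := Cpoch0_nz _ (n - k) (Hy k)). assert (Hf := RtoC_nz _ (INR_fact_neq_0 (n - k))).
      cfield. split; assumption.
    + rewrite A3. f_equal. apply sum_n_m_ext. intros k. unfold Cdiv. cring.
  - transitivity (- sum_n_m (fun k => f k * ((Hnat (n + 1) - Hnat (n - k)) * F (n - k) (RtoC (INR k) + 1))) l1 u1).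
    + rewrite <- sumC_opp. apply sum_n_m_ext_loc. intros k Hk. rewrite binom_eval by lia. unfold F.
      assert (HP := Cpoch0_nz _ (n - k) (Hy1 k)). assert (Hf := RtoC_nz _ (INR_fact_neq_0 (n - k))).
      cfield. split; assumption.
    + rewrite A4. f_equal. apply sum_n_m_ext. intros k. rewrite INR_plus_C. unfold Cdiv. simpl (INR 1). cring.
Qed.
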